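(* Let $a_n$ denote the size of the smallest string attractor of the length-$n$ prefix $\mathbf{t}[0..n-1]$ of the Thue–Morse word $\mathbf{t}$. Then $$a_n=\begin{cases}1,& n=1;\\ 2,& 2\le n\le 6;\\ 3,& 7\le n\le 14 \text{ or } 17\le n\le 24;\\ 4,& n\in\{15,16\}\text{ or } n\ge 25.\end{cases}$$
   Context: The Thue–Morse word $\mathbf{t}=0110100110010110\cdots$ is the infinite fixed point, starting with $0$, of the morphism $\mu$ with $0\mapsto 01$, $1\mapsto 10$; it is indexed starting at $0$. A string attractor of a finite word $w=w[0..n-1]$ is a set $S\subseteq\{0,\ldots,n-1\}$ such that every nonempty factor $f$ of $w$ has an occurrence $w[p..q]=f$ with $p\le i\le q$ for some $i\in S$. *)

(* Defs.v *)
From mathcomp Require Import all_boot.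
Set Implicit Arguments. Unset Strict Implicit. Unset Printing Implicit Defensive.

Definition mu (s : seq nat) : seq nat :=
  flatten [seq (if x == 0 then [:: 0; 1] else [:: 1; 0]) | x <- s].

(* mu^(k+1)(0) has length 2^(k+1) > k and each mu^j(0) is a prefix of
   mu^(j+1)(0), so the k-th letter of the fixed point t = lim mu^j(0)
   is the k-th letter of mu^(k+1)(0). Indexing starts at 0. *)
Definition tm (k : nat) : nat := nth 0 (iter k.+1 mu [:: 0]) k.

Definition tm_prefix (n : nat) : seq nat := mkseq tm n.

Definition slice (w : seq nat) (p l : nat) : seq nat := take l (drop p w).

Definition is_string_attractor (n : nat) (w : seq nat) (S : {set 'I_n}) : Prop :=
  forall p l, 0 < l -> p + l <= n ->
    exists p', p' + l <= n /\ slice w p' l = slice w p l /\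
      exists i : 'I_n, i \in S /\ p' <= i < p' + l.

Definition a_claimed (n : nat) : nat :=
  if n == 1 then 1
  else if n <= 6 then 2
  else if (n <= 14) || ((17 <= n) && (n <= 24)) then 3
  else 4.

(* Main.v *)
Require Import Defs.
From mathcomp Require Import all_boot zify.
Set Implicit Arguments. Unset Strict Implicit. Unset Printing Implicit Defensive.

Definition T j := iter j mu [:: 0].
Definition lt (x : nat) := if x == 0 then 0 else 1.

Lemma mu_cat s r : mu (s ++ r) = mu s ++ mu r.
Proof. by rewrite /mu map_cat flatten_cat. Qed.

Lemma mu_cons x s : mu (x :: s) = (if x == 0 then [:: 0; 1] else [:: 1; 0]) ++ mu s.
Proof. by []. Qed.

Lemma size_mu s : size (mu s) = (size s).*2.
Proof. elim: s => [|x s IH] //; rewrite mu_cons size_cat IH; case: (x == 0) => /=; lia. Qed.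

Lemma nth_mu_even s i : i < size s -> nth 0 (mu s) i.*2 = lt (nth 0 s i).
Proof.
elim: s i => [|x s IH] [|i] //= H; rewrite mu_cons.
- by rewrite /lt; case: (x == 0).
- rewrite doubleS; case: (x == 0) => /=; exact: IH.
Qed.

Lemma nth_mu_odd s i : i < size s -> nth 0 (mu s) i.*2.+1 = 1 - lt (nth 0 s i).
Proof.
elim: s i => [|x s IH] [|i] //= H; rewrite mu_cons.
- by rewrite /lt; case: (x == 0).
- rewrite doubleS; case: (x == 0) => /=; exact: IH.
Qed.

Lemma size_T j : size (T j) = 2 ^ j.
Proof. elim: j => [|j IH] //; rewrite /T iterS -/(T j) size_mu IH expnS; lia. Qed.

Lemma T_bin j : all (fun x => x <= 1) (T j).
Proof.
elim: j => [|j IH] //; rewrite /T iterS -/(T j).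
elim: (T j) IH => [|x s IH2] //= /andP [_ H]; rewrite mu_cons all_cat IH2 // andbT.
by case: (x == 0).
Qed.

Lemma T_prefix j : exists r, T j.+1 = T j ++ r.
Proof.
elim: j => [|j [r IH]]; first by exists [:: 1].
exists (mu r); change (mu (T j.+1) = T j.+1 ++ mu r); by rewrite {1}IH mu_cat.
Qed.

Lemma T_prefix2 j k : j <= k -> exists r, T k = T j ++ r.
Proof.
move=> /subnK <-; elim: (k - j) => [|d [r IH]].
  by exists [::]; rewrite cats0.
have [r2 E] := T_prefix (d + j). exists (r ++ r2). by rewrite addSn E IH catA.
Qed.

Lemma nth_T j k i : i < 2 ^ j -> i < 2 ^ k -> nth 0 (T j) i = nth 0 (T k) i.
Proof.
move=> Hj Hk; case: (leqP j k) => H.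
- have [r ->] := T_prefix2 H. by rewrite nth_cat size_T Hj.
- have [r ->] := T_prefix2 (ltnW H). by rewrite nth_cat size_T Hk.
Qed.

Lemma tmE j i : i < 2 ^ j -> tm i = nth 0 (T j) i.
Proof.
move=> H; rewrite /tm -/(T i.+1); apply: nth_T => //.
by apply: (leq_trans (ltn_expl i (leqnn 2))); rewrite leq_exp2l.
Qed.

Lemma lt_id x : x <= 1 -> lt x = x.
Proof. by case: x => [|[|]]. Qed.

Lemma tm_bin i : tm i <= 1.
Proof.
rewrite (tmE (j := i)); last exact: ltn_expl.
case: (ltnP i (size (T i))) => H; last by rewrite nth_default.
exact: (allP (T_bin i) _ (mem_nth 0 H)).
Qed.

Lemma tm_even i : tm i.*2 = tm i.
Proof.
have H : i < 2 ^ i by exact: ltn_expl.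
rewrite (tmE (j := i.+1)); last by rewrite expnS; lia.
rewrite /T iterS -/(T i) nth_mu_even ?size_T // -tmE // lt_id //; exact: tm_bin.
Qed.

Lemma tm_odd i : tm i.*2.+1 = 1 - tm i.
Proof.
have H : i < 2 ^ i by exact: ltn_expl.
rewrite (tmE (j := i.+1)); last by rewrite expnS; lia.
rewrite /T iterS -/(T i) nth_mu_odd ?size_T // -tmE // lt_id //; exact: tm_bin.
Qed.

Definition occ n q p l := q + l <= n /\ forall i, i < l -> tm (q + i) = tm (p + i).
Definition P1 n (S : seq nat) := forall p l, 0 < l -> p + l <= n ->
  exists q s, occ n q p l /\ s \in S /\ q <= s < q + l.
Definition P2 n (S : seq nat) := forall p l, 1 < l -> p + l <= n ->
  exists q s, occ n q p l /\ s \in S /\ q <= s /\ s.+1 < q + l.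

Lemma tm2 x : tm (2 * x) = tm x. Proof. by rewrite mul2n tm_even. Qed.
Lemma tm2S x : tm (2 * x + 1) = 1 - tm x. Proof. by rewrite mul2n addn1 tm_odd. Qed.

Lemma lift P' P k : (forall j, j < k -> tm (P' + j) = tm (P + j)) ->
  forall x, x < 2 * k -> tm (2 * P' + x) = tm (2 * P + x).
Proof.
move=> H x Hx.
have Ex := odd_double_half x; rewrite -mul2n in Ex.
have Hc : x./2 < k by move: Ex Hx; case: (odd x) => /=; lia.
case: (odd x) Ex => /= Ex.
- have -> : 2 * P' + x = 2 * (P' + x./2) + 1 by lia.
  have -> : 2 * P + x = 2 * (P + x./2) + 1 by lia.
  by rewrite !tm2S H.
- have -> : 2 * P' + x = 2 * (P' + x./2) by lia.
  have -> : 2 * P + x = 2 * (P + x./2) by lia.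
  by rewrite !tm2 H.
Qed.

Lemma tm0 : tm 0 = 0. Proof. by rewrite (tmE (j := 3)). Qed.
Lemma tm1 : tm 1 = 1. Proof. by rewrite (tmE (j := 3)). Qed.
Lemma tm2' : tm 2 = 1. Proof. by rewrite (tmE (j := 3)). Qed.
Lemma tm5 : tm 5 = 0. Proof. by rewrite (tmE (j := 3)). Qed.
Lemma tm6 : tm 6 = 0. Proof. by rewrite (tmE (j := 3)). Qed.

Definition g s := 2 * s + 1.

Lemma step L R S : 7 <= L -> (forall m, L <= m <= R -> P1 m S /\ P2 m S) ->
  forall n, 2 * L <= n <= 2 * R -> P1 n (map g S) /\ P2 n (map g S).
Proof.
move=> HL H n Hn.
have [h [r [Hr En]]] : exists h r, r <= 1 /\ n = 2 * h + r.
  exists n./2, (odd n); split; first by case: (odd n).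
  have := odd_double_half n; rewrite -mul2n; lia.
have [H1h H2h] : P1 h S /\ P2 h S by apply: H; lia.
have [H1M H2M] : P1 (h + r) S /\ P2 (h + r) S by apply: H; lia.
have decomp : forall p, exists P b, b <= 1 /\ p = 2 * P + b.
  move=> p; exists p./2, (odd p); split; first by case: (odd p).
  have := odd_double_half p; rewrite -mul2n; lia.
split.
- move=> p l Hl Hpl.
  have [P [b [Hb Ep]]] := decomp p.
  have [Q [e [He EE]]] := decomp (p + l + 1).
  case: e He EE => [|[|//]] _ EE.
  + (* p + l odd *)
    case: (ltnP 1 (Q - P)) => Hk.
    * have [P' [s [[Hocc1 Hocc2] [Hs Hw]]]] := H2M P (Q - P) Hk ltac:(lia).
      exists (2 * P' + b), (g s); split; [split|split]; [lia| |by apply: map_f|rewrite /g; lia].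
      move=> i Hi; rewrite -addnA (lift Hocc2) ?Ep -?addnA //; lia.
    * have [Hb0 Hl1] : b = 0 /\ l = 1 by lia.
      subst b l.
      have [p0 [Hp0 Hp0n]] : exists p0, tm p0 = 1 - tm P /\ p0 < 2.
        move: (tm_bin P); case: (tm P) => [|[|]] //= _; [exists 1; rewrite tm1 | exists 0; rewrite tm0] => //.
      have [P' [s [[Hocc1 Hocc2] [Hs Hw]]]] := H1h p0 1 isT ltac:(lia).
      have Es : s = P' by lia.
      subst s.
      exists (2 * P' + 1), (g P'); split; [split|split]; [lia| |by apply: map_f|rewrite /g; lia].
      move=> i Hi; have -> : i = 0 by lia.
      rewrite !addn0 Ep addn0 tm2S tm2.
      have := Hocc2 0 isT; rewrite !addn0 Hp0 => ->.
      have := tm_bin P; lia.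
  + (* p + l even *)
    have [P' [s [[Hocc1 Hocc2] [Hs Hw]]]] := H1h P (Q - P) ltac:(lia) ltac:(lia).
    exists (2 * P' + b), (g s); split; [split|split]; [lia| |by apply: map_f|rewrite /g; lia].
    move=> i Hi; rewrite -addnA (lift Hocc2) ?Ep -?addnA //; lia.
- move=> p l Hl Hpl.
  have [P [b [Hb Ep]]] := decomp p.
  have [Q [e [He EE]]] := decomp (p + l + 1).
  case: e He EE => [|[|//]] _ EE.
  + (* p + l odd *)
    have [P' [s [[Hocc1 Hocc2] [Hs Hw]]]] := H2M P (Q - P) ltac:(lia) ltac:(lia).
    exists (2 * P' + b), (g s); split; [split|split]; [lia| |by apply: map_f|rewrite /g; lia].
    move=> i Hi; rewrite -addnA (lift Hocc2) ?Ep -?addnA //; lia.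
  + case: (ltnP 1 (Q - P)) => Hk.
    * have [P' [s [[Hocc1 Hocc2] [Hs Hw]]]] := H2h P (Q - P) Hk ltac:(lia).
      exists (2 * P' + b), (g s); split; [split|split]; [lia| |by apply: map_f|rewrite /g; lia].
      move=> i Hi; rewrite -addnA (lift Hocc2) ?Ep -?addnA //; lia.
    * have [Hb0 Hl1] : b = 0 /\ l = 2 by lia.
      subst b l.
      have [p0 [Hp0 [Hp1 Hp0n]]] : exists p0, tm p0 = 1 - tm P /\ tm (p0 + 1) = 1 - tm P /\ p0 < 6.
        move: (tm_bin P); case: (tm P) => [|[|]] //= _.
        - by exists 1; rewrite tm1 tm2'.
        - by exists 5; rewrite tm5 tm6.
      have [P' [s [[Hocc1 Hocc2] [Hs Hw]]]] := H2h p0 2 isT ltac:(lia).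
      have Es : s = P' by lia.
      subst s.
      exists (2 * P' + 1), (g P'); split; [split|split]; [lia| |by apply: map_f|rewrite /g; lia].
      move=> i Hi; have Ei : i = 0 \/ i = 1 by lia.
      case: Ei => ->.
      -- rewrite !addn0 Ep addn0 tm2S tm2.
         have := Hocc2 0 isT; rewrite !addn0 Hp0 => ->.
         have := tm_bin P; lia.
      -- have -> : 2 * P' + 1 + 1 = 2 * (P' + 1) by lia.
         have -> : p + 1 = 2 * P + 1 by lia.
         rewrite tm2 tm2S.
         have := Hocc2 1 isT; rewrite Hp1 => ->.
         have := tm_bin P; lia.
Qed.

Lemma fam L R S j : 7 <= L -> (forall m, L <= m <= R -> P1 m S /\ P2 m S) ->
  forall n, L * 2 ^ j <= n <= R * 2 ^ j -> P1 n (map (iter j g) S) /\ P2 n (map (iter j g) S).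
Proof.
move=> HL H; elim: j => [|j IH] n Hn.
- have -> : map (iter 0 g) S = S by elim: S {H} => //= x s ->.
  apply: H; rewrite !muln1 in Hn; exact: Hn.
- have -> : map (iter j.+1 g) S = map g (map (iter j g) S).
    by rewrite -map_comp; apply: eq_map.
  apply: (step (L := L * 2 ^ j) (R := R * 2 ^ j)).
  + have : 0 < 2 ^ j by rewrite expn_gt0.
    have : L <= L * 2 ^ j by rewrite leq_pmulr // expn_gt0.
    lia.
  + exact: IH.
  + rewrite expnS in Hn; lia.
Qed.

Lemma iter_g j s : (iter j g s).+1 = s.+1 * 2 ^ j.
Proof. elim: j => [|j IH]; first by rewrite muln1. rewrite iterS expnS mulnCA -IH; set y := iter j g s; rewrite /g; lia. Qed.

Lemma slice_tm n p l : p + l <= n -> slice (tm_prefix n) p l = mkseq (fun i => tm (p + i)) l.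
Proof.
move=> H; apply: (@eq_from_nth _ 0).
- rewrite size_takel ?size_mkseq // size_drop /tm_prefix size_mkseq; lia.
- move=> i; rewrite size_takel ?size_mkseq; last by rewrite size_drop /tm_prefix size_mkseq; lia.
  move=> Hi; rewrite nth_take // nth_drop /tm_prefix !nth_mkseq //; lia.
Qed.

Lemma card_setl n (Sl : seq nat) : uniq Sl -> all (fun x => x < n) Sl ->
  #|[set i : 'I_n | val i \in Sl]| = size Sl.
Proof.
move=> U A; rewrite cardE -(size_map val); apply: perm_size.
apply: uniq_perm => //; first by rewrite map_inj_uniq ?enum_uniq //; exact: val_inj.
move=> x; apply/idP/idP.
- by case/mapP => i; rewrite mem_enum inE => Hi ->.
- move=> Hx; have Hxn : x < n by exact: (allP A).
  apply/mapP; exists (Ordinal Hxn) => //; by rewrite mem_enum inE.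
Qed.

Lemma mkseq_lt (f1 f2 : nat -> nat) l : (forall i, i < l -> f1 i = f2 i) -> mkseq f1 l = mkseq f2 l.
Proof.
move=> H; apply: (@eq_from_nth _ 0); rewrite !size_mkseq // => i Hi; rewrite !nth_mkseq //; exact: H.
Qed.

Lemma P1_att n Sl : P1 n Sl -> all (fun x => x < n) Sl ->
  is_string_attractor (tm_prefix n) [set i : 'I_n | val i \in Sl].
Proof.
move=> H A p l Hl Hpl.
have [q [s [[Hq Hocc] [Hs Hw]]]] := H p l Hl Hpl.
exists q; split => //; split.
- rewrite !slice_tm //; exact: mkseq_lt.
- have Hsn : s < n by lia.
  exists (Ordinal Hsn); by rewrite inE.
Qed.

Definition tmv i := nth 0 (T 6) i.
Lemma tmvE i : i < 64 -> tm i = tmv i.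
Proof. move=> H; exact: (tmE (j := 6)). Qed.

Lemma tm_prefix_small n : n <= 64 -> tm_prefix n = mkseq tmv n.
Proof.
move=> H; apply: (@eq_from_nth _ 0); rewrite /tm_prefix !size_mkseq // => i Hi.
rewrite !nth_mkseq // tmvE //; lia.
Qed.

Definition P1b n (S : seq nat) :=
  let w := mkseq tmv n in
  all (fun l => all (fun p => has (fun q => (slice w q l == slice w p l) &&
     has (fun s => (q <= s) && (s < q + l)) S) (iota 0 (n - l).+1)) (iota 0 (n - l).+1)) (iota 1 n).
Definition P2b n (S : seq nat) :=
  let w := mkseq tmv n in
  all (fun l => all (fun p => has (fun q => (slice w q l == slice w p l) &&
     has (fun s => (q <= s) && (s.+1 < q + l)) S) (iota 0 (n - l).+1)) (iota 0 (n - l).+1)) (iota 2 n).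

Definition SA := [:: 7; 11; 15; 23].
Definition SB := [:: 11; 15; 23; 31].
Definition SC := [:: 11; 15; 31; 39].

Lemma baseA : all (fun n => P1b n SA && P2b n SA) (iota 26 15).
Proof. vm_compute. reflexivity. Qed.
Lemma baseB : all (fun n => P1b n SB && P2b n SB) (iota 36 13).
Proof. vm_compute. reflexivity. Qed.
Lemma baseC : all (fun n => P1b n SC && P2b n SC) (iota 48 5).
Proof. vm_compute. reflexivity. Qed.

Lemma mkseq_eq_nth (f1 f2 : nat -> nat) l i : mkseq f1 l = mkseq f2 l -> i < l -> f1 i = f2 i.
Proof. by move=> E Hi; have := congr1 (fun s => nth 0 s i) E; rewrite /= !nth_mkseq. Qed.

Lemma P1b_sound n S : n <= 64 -> P1b n S -> P1 n S.
Proof.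
move=> Hn H p l Hl Hpl.
have Hl' : l \in iota 1 n by rewrite mem_iota; lia.
have Hp' : p \in iota 0 (n - l).+1 by rewrite mem_iota; lia.
have := allP (allP H l Hl') p Hp'; case/hasP => q; rewrite mem_iota => Hq /andP [/eqP E /hasP [s Hs Hw]].
exists q, s; split; last by split.
split; first lia.
rewrite -tm_prefix_small // !slice_tm in E; try lia.
move=> i Hi; exact: (mkseq_eq_nth E Hi).
Qed.

Lemma P2b_sound n S : n <= 64 -> P2b n S -> P2 n S.
Proof.
move=> Hn H p l Hl Hpl.
have Hl' : l \in iota 2 n by rewrite mem_iota; lia.
have Hp' : p \in iota 0 (n - l).+1 by rewrite mem_iota; lia.
have := allP (allP H l Hl') p Hp'; case/hasP => q; rewrite mem_iota => Hq /andP [/eqP E /hasP [s Hs /andP [Hw1 Hw2]]].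
exists q, s; split; last by split.
split; first lia.
rewrite -tm_prefix_small // !slice_tm in E; try lia.
move=> i Hi; exact: (mkseq_eq_nth E Hi).
Qed.

Definition covset n p l :=
  let w := mkseq tmv n in
  let os := [seq q <- iota 0 (n - l).+1 | slice w q l == slice w p l] in
  [seq i <- iota 0 n | has (fun q => (q <= i) && (i < q + l)) os].

Fixpoint search (k : nat) (covs : seq (seq nat)) : bool :=
  match covs with
  | [::] => true
  | c0 :: _ => match k with
               | 0 => false
               | k'.+1 => has (fun i => search k' [seq c <- covs | i \notin c]) c0
               end
  end.

Lemma search_complete k covs (S : seq nat) : size S <= k ->
  all (fun c => has (fun x => x \in S) c) covs -> search k covs.
Proof.
elim: k covs S => [|k IH] [|c0 cs] S //= Hs.
- by move: Hs; case: S => //= _ /andP [/hasP [x _ //]].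
- move/andP => [/hasP [i Hi HiS] Hall].
  apply/hasP; exists i => //.
  apply: (IH _ [seq x <- S | x != i]).
  + have : count (fun x => x == i) S > 0 by rewrite -has_count; apply/hasP; exists i.
    have := count_predC (fun x => x == i) S.
    rewrite size_filter.
    have -> : count (predC (fun x => x == i)) S = count (fun x => x != i) S by apply: eq_count.
    move=> H1 H2; rewrite -H1 in Hs; move: Hs H2; move: (count _ S) (count _ S) => a b; lia.
  + rewrite Hi /=.
    apply/allP => c; rewrite mem_filter => /andP [Hic Hc].
    have := allP Hall c Hc.
    case/hasP => x Hx HxS; apply/hasP; exists x => //.
    rewrite mem_filter HxS andbT; apply/eqP => Ex; subst x; by rewrite Hx in Hic.
Qed.

Definition lowb n a (cert : seq (nat * nat)) :=
  all (fun pl => (0 < pl.2) && (pl.1 + pl.2 <= n)) cert &&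
  ~~ search a.-1 [seq covset n pl.1 pl.2 | pl <- cert].

Lemma lower_sound n a cert (S : {set 'I_n}) : n <= 64 -> lowb n a cert ->
  is_string_attractor (tm_prefix n) S -> a <= #|S|.
Proof.
move=> Hn /andP [Hv Hs] Hatt.
rewrite leqNgt; apply/negP => Hlt.
move/negP: Hs; apply.
apply: (search_complete (S := map val (enum S))); first by rewrite size_map -cardE; move: Hlt; case: (a).
apply/allP => c /mapP [[p l] Hpl ->] /=.
have /andP [Hl Hpl'] := allP Hv _ Hpl; simpl in Hl, Hpl'.
have [q [Hq [E [i [HiS Hw]]]]] := Hatt p l Hl Hpl'.
apply/hasP; exists (val i); last by apply/mapP; exists i; rewrite ?mem_enum.
rewrite mem_filter; apply/andP; split; last by rewrite mem_iota add0n leq0n; exact: ltn_ord.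
apply/hasP; exists q => //.
rewrite mem_filter -tm_prefix_small // E eqxx andTb mem_iota; lia.
Qed.
Definition atts : seq (seq nat) := [:: [:: 0];
  [:: 0; 1];
  [:: 0; 1];
  [:: 0; 2];
  [:: 0; 2];
  [:: 1; 3];
  [:: 1; 2; 5];
  [:: 1; 2; 5];
  [:: 1; 2; 5];
  [:: 0; 2; 5];
  [:: 2; 5; 7];
  [:: 2; 5; 7];
  [:: 2; 5; 10];
  [:: 2; 5; 10];
  [:: 1; 5; 7; 11];
  [:: 1; 5; 7; 11];
  [:: 5; 9; 13];
  [:: 5; 9; 13];
  [:: 5; 9; 13];
  [:: 5; 9; 13];
  [:: 7; 13; 17];
  [:: 7; 13; 17];
  [:: 7; 13; 17];
  [:: 7; 13; 17];
  [:: 5; 7; 13; 19]].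
Definition certs : seq (seq (nat * nat)) := [:: [:: (0, 1)];
  [:: (0, 1); (1, 1)];
  [:: (0, 1); (1, 1)];
  [:: (0, 1); (1, 1)];
  [:: (0, 1); (1, 2)];
  [:: (1, 2); (0, 1)];
  [:: (1, 2); (5, 2); (2, 3); (0, 2)];
  [:: (1, 2); (5, 2); (2, 3); (0, 2); (3, 3)];
  [:: (5, 2); (1, 3); (2, 3); (0, 2); (1, 2); (3, 3)];
  [:: (5, 2); (2, 3); (0, 2); (1, 2); (3, 3)];
  [:: (2, 3); (3, 3); (5, 3); (7, 4); (5, 2)];
  [:: (2, 3); (3, 3); (5, 2); (7, 4); (1, 2)];
  [:: (2, 3); (5, 2); (7, 4); (3, 4); (1, 2)];
  [:: (1, 2); (5, 2); (7, 4); (2, 4); (3, 4); (1, 4)];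
  [:: (5, 2); (1, 4); (7, 4); (9, 4); (10, 4); (11, 4); (2, 4); (3, 4); (5, 4)];
  [:: (5, 2); (1, 4); (7, 4); (9, 4); (10, 4); (11, 4); (2, 4); (3, 4); (5, 4)];
  [:: (5, 2); (7, 4); (9, 4); (10, 4); (11, 4); (2, 4)];
  [:: (5, 2); (7, 4); (9, 4); (10, 4); (11, 4); (3, 4)];
  [:: (5, 4); (7, 4); (9, 4); (10, 4); (11, 4); (5, 2)];
  [:: (5, 4); (7, 4); (9, 4); (10, 4); (11, 4); (5, 2)];
  [:: (5, 4); (7, 4); (10, 4); (11, 4); (5, 2)];
  [:: (5, 4); (7, 4); (11, 4); (5, 2)];
  [:: (5, 4); (7, 4); (11, 5); (5, 2)];
  [:: (5, 4); (7, 4); (11, 6); (5, 2)];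
  [:: (5, 4); (7, 5); (11, 6); (15, 6); (19, 6); (1, 2); (5, 2); (9, 4)];
  [:: (5, 4); (7, 6); (11, 6); (15, 6); (19, 6); (1, 2); (5, 2); (9, 4)];
  [:: (5, 5); (7, 6); (11, 6); (15, 6); (19, 6); (21, 6); (5, 2); (9, 4); (3, 6)];
  [:: (3, 6); (5, 6); (7, 6); (11, 6); (15, 6); (19, 6); (21, 6); (5, 2); (9, 4)];
  [:: (3, 6); (5, 6); (7, 6); (11, 6); (15, 6); (19, 6); (21, 6); (23, 6); (9, 4)];
  [:: (3, 6); (5, 6); (7, 6); (11, 6); (15, 6); (19, 6); (21, 6); (23, 6); (9, 4)];
  [:: (3, 6); (5, 6); (7, 6); (11, 6); (15, 6); (19, 6); (21, 6); (23, 6); (9, 4)];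
  [:: (3, 6); (5, 6); (7, 6); (11, 6); (15, 6); (19, 6); (21, 6); (23, 6); (9, 4)];
  [:: (5, 6); (7, 6); (11, 6); (15, 6); (19, 6); (21, 6); (23, 6); (9, 4); (10, 4); (3, 7)];
  [:: (5, 6); (7, 6); (11, 6); (15, 6); (19, 6); (21, 6); (23, 6); (9, 4); (10, 4); (11, 4)];
  [:: (7, 6); (11, 6); (15, 6); (19, 6); (21, 6); (23, 6); (9, 4); (10, 4); (11, 4); (1, 2); (5, 2)];
  [:: (7, 6); (11, 6); (15, 6); (19, 6); (21, 6); (23, 6); (9, 4); (10, 4); (11, 4); (1, 2); (5, 2)];
  [:: (11, 6); (15, 6); (19, 6); (21, 6); (23, 6); (1, 2); (5, 2); (9, 4); (3, 6)];
  [:: (11, 6); (15, 6); (19, 6); (21, 6); (23, 6); (1, 2); (5, 2); (9, 4); (3, 6)];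
  [:: (11, 6); (15, 6); (19, 6); (21, 6); (23, 6); (3, 6); (5, 2); (9, 4)];
  [:: (11, 6); (15, 6); (19, 6); (21, 6); (23, 6); (3, 6); (5, 2); (9, 4)];
  [:: (11, 6); (15, 6); (21, 6); (23, 6); (31, 10); (9, 4); (10, 4); (11, 4); (3, 6)];
  [:: (11, 6); (15, 6); (21, 6); (23, 6); (31, 10); (9, 4); (10, 4); (11, 4); (3, 6)];
  [:: (11, 6); (15, 6); (23, 6); (31, 10); (9, 4); (10, 4); (11, 4); (3, 6); (5, 6)];
  [:: (11, 6); (15, 6); (23, 6); (31, 10); (9, 4); (10, 4); (11, 4); (3, 6); (5, 6)];
  [:: (11, 6); (15, 6); (23, 7); (31, 10); (9, 4); (10, 4); (11, 4); (3, 6); (5, 6); (21, 6)];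
  [:: (11, 6); (15, 6); (23, 8); (31, 10); (9, 4); (10, 4); (11, 4); (3, 6); (5, 6); (21, 6)];
  [:: (11, 6); (15, 6); (23, 9); (31, 10); (19, 6); (21, 6); (9, 4); (10, 4); (11, 4); (3, 6)];
  [:: (11, 6); (15, 6); (23, 10); (31, 10); (19, 6); (21, 6); (9, 4); (10, 4); (11, 4); (3, 6)];
  [:: (11, 6); (15, 7); (23, 10); (31, 10); (39, 10); (10, 4)];
  [:: (11, 6); (15, 8); (23, 10); (31, 10); (39, 10); (11, 4)];
  [:: (11, 6); (15, 9); (23, 10); (31, 10); (39, 10); (3, 6); (5, 6); (7, 6); (9, 4); (19, 6)];
  [:: (11, 6); (15, 10); (23, 10); (31, 10); (39, 10); (3, 6); (5, 6); (7, 6); (9, 4); (19, 6)];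
  [:: (11, 7); (15, 10); (23, 10); (31, 10); (39, 10); (43, 10); (19, 6)];
  [:: (11, 8); (15, 10); (23, 10); (31, 10); (39, 10); (43, 10); (19, 6)];
  [:: (11, 9); (15, 10); (23, 10); (31, 10); (39, 10); (43, 10); (19, 6); (7, 10)];
  [:: (7, 10); (11, 10); (15, 10); (23, 10); (31, 10); (39, 10); (43, 10); (19, 6)];
  [:: (7, 10); (11, 10); (15, 10); (23, 10); (31, 10); (39, 10); (43, 10); (47, 10); (19, 6)];
  [:: (7, 10); (11, 10); (15, 10); (23, 10); (31, 10); (39, 10); (43, 10); (47, 10); (19, 6)];
  [:: (7, 10); (11, 10); (15, 10); (23, 10); (31, 10); (39, 10); (43, 10); (47, 10); (19, 6)]].

Lemma upcheck : all (fun n => let S := nth [::] atts n.-1 in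
   P1b n S && uniq S && all (fun x => x < n) S && (size S == a_claimed n)) (iota 1 25).
Proof. vm_compute. reflexivity. Qed.

Lemma lowcheck : all (fun n => lowb n (a_claimed n) (nth [::] certs n.-1)) (iota 1 59).
Proof. vm_compute. reflexivity. Qed.

Definition D13 := undup [seq mkseq (fun i => tmv (p + i)) 13 | p <- iota 0 48].
Lemma size_D13 : size D13 = 40. Proof. vm_compute. reflexivity. Qed.

Lemma count13 n (S : {set 'I_n}) : 60 <= n -> is_string_attractor (tm_prefix n) S -> 4 <= #|S|.
Proof.
move=> Hn Hatt.
suff : size D13 <= size [seq slice (tm_prefix n) (val x - val y) 13 | x <- enum S, y <- enum 'I_13].
  rewrite size_D13 size_allpairs size_enum_ord -cardE; move: #|S| => c; lia.
apply: uniq_leq_size; first exact: undup_uniq.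
move=> f; rewrite mem_undup => /mapP [p Hp ->].
move: Hp; rewrite mem_iota => Hp.
have Hsl : slice (tm_prefix n) p 13 = mkseq (fun i => tmv (p + i)) 13.
  rewrite slice_tm; last lia.
  apply: mkseq_lt => i Hi; apply: tmvE; lia.
have [q [Hq [E [i [HiS Hw]]]]] := Hatt p 13 isT ltac:(lia).
have Ho : i - q < 13 by lia.
apply/allpairsP; exists (i, Ordinal Ho); split; rewrite ?mem_enum //=.
rewrite -Hsl -E; congr slice; lia.
Qed.

Lemma exj n : 26 <= n -> exists j, 26 * 2 ^ j <= n < 52 * 2 ^ j.
Proof.
have : forall N n, n <= N -> 26 <= n -> exists j, 26 * 2 ^ j <= n < 52 * 2 ^ j; last by apply; exact: leqnn.
elim=> [|N IH] m Hm H26; first lia.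
case: (ltnP m 52) => H52; first by exists 0; rewrite expn0; lia.
have [j Hj] := IH m./2 ltac:(have := odd_double_half m; rewrite -mul2n; lia) ltac:(have := odd_double_half m; rewrite -mul2n; lia).
exists j.+1; rewrite expnS; have := odd_double_half m; rewrite -mul2n; lia.
Qed.

Lemma a4 n : 25 <= n -> a_claimed n = 4.
Proof.
move=> H; rewrite /a_claimed.
have -> : (n == 1) = false by apply/eqP; lia.
have -> : (n <= 6) = false by apply/negbTE; rewrite -ltnNge; lia.
have -> : (n <= 14) || ((17 <= n) && (n <= 24)) = false.
  by apply/negbTE; apply/negP => /orP [|/andP []]; lia.
by [].
Qed.

Lemma base_of L R S : R <= 64 -> all (fun n => P1b n S && P2b n S) (iota L (R - L).+1) ->
  forall m, L <= m <= R -> P1 m S /\ P2 m S.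
Proof.
move=> HR H m Hm.
have /andP [H1 H2] := allP H m ltac:(rewrite mem_iota; lia).
split; [apply: P1b_sound|apply: P2b_sound] => //; lia.
Qed.

Lemma iter_inj j : injective (iter j g).
Proof.
move=> x y E; have := iter_g j x; rewrite E iter_g => /eqP.
by rewrite eqn_pmul2r ?expn_gt0 // => /eqP [].
Qed.

Lemma fam_att L R S j n : 7 <= L -> R <= 64 -> all (fun n => P1b n S && P2b n S) (iota L (R - L).+1) ->
  uniq S -> all (fun x => x < L) S -> L * 2 ^ j <= n <= R * 2 ^ j ->
  exists S' : {set 'I_n}, is_string_attractor (tm_prefix n) S' /\ #|S'| = size S.
Proof.
move=> HL HR Hb U A Hn.
have [H1 _] := fam (j := j) HL (base_of HR Hb) Hn.
have A' : all (fun x => x < n) (map (iter j g) S).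
  apply/allP => y /mapP [x Hx ->].
  have Hx' := allP A x Hx.
  have := iter_g j x.
  have : x.+1 * 2 ^ j <= L * 2 ^ j by rewrite leq_mul2r Hx' orbT.
  lia.
exists [set i : 'I_n | val i \in map (iter j g) S]; split.
- exact: P1_att.
- by rewrite card_setl ?size_map // map_inj_uniq //; exact: iter_inj.
Qed.

Unset Implicit Arguments.

Theorem theorem5 (n : nat) : 1 <= n ->
  (exists S : {set 'I_n}, is_string_attractor (tm_prefix n) S /\ #|S| = a_claimed n) /\
  (forall S : {set 'I_n}, is_string_attractor (tm_prefix n) S -> a_claimed n <= #|S|).
Proof.
move=> Hn; split.
- case: (leqP n 25) => H25.
  + have := allP upcheck n ltac:(rewrite mem_iota; lia).
    set S := nth [::] atts n.-1 => /andP [/andP [/andP [HP U] A] /eqP Hs].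
    exists [set i : 'I_n | val i \in S]; split.
    * apply: P1_att => //; apply: P1b_sound => //; lia.
    * by rewrite card_setl.
  + rewrite a4; last lia.
    have [j /andP [Hj1 Hj2]] := exj H25.
    case: (leqP n (40 * 2 ^ j)) => HA.
    * apply: (fam_att (L := 26) (R := 40) (S := SA) (j := j) _ _ baseA); [done | done | done | done | lia].
    case: (leqP n (48 * 2 ^ j)) => HB.
    * apply: (fam_att (L := 36) (R := 48) (S := SB) (j := j) _ _ baseB); [done | done | done | done | lia].
    * apply: (fam_att (L := 48) (R := 52) (S := SC) (j := j) _ _ baseC); [done | done | done | done | lia].
- move=> S Hatt.
  case: (leqP n 59) => H59.
  + apply: (lower_sound (cert := nth [::] certs n.-1)) => //; first lia.
    exact: (allP lowcheck n ltac:(rewrite mem_iota; lia)).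
  + rewrite a4; last lia.
    exact: count13.
Qed.
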